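(* Let $F$ be a field with algebraic closure $\overline{F}$, and let $A\in F^{r\times r}$ and $B\in F^{s\times s}$. Then (a) $\displaystyle\sum_{\alpha\in\overline{F}}k_{A,\alpha}k_{B,\alpha}\le\dim(C(A,B))\le\sum_{\alpha\in\overline{F}}m_{A,\alpha}m_{B,\alpha}$; and (b) $(r-\mathrm{Rk}(A))(s-\mathrm{Rk}(B))\le\dim(C(A,B))\le(r-\mathrm{Rk}(A))(s-\mathrm{Rk}(B))+\mathrm{Rk}(A)\mathrm{Rk}(B)$.
   Context: $C(A,B):=\{X\in F^{r\times s}\mid AX=XB\}$. Regarding $A$ as acting on an $r$-dimensional vector space over $\overline{F}$, $k_{A,\alpha}$ and $m_{A,\alpha}$ denote the dimensions of the $\alpha$-eigenspace and of the generalized $\alpha$-eigenspace of $A$, respectively (so $c_A(t)=\prod_\alpha(t-\alpha)^{m_{A,\alpha}}$, with only finitely many nonzero terms); similarly for $B$. $\mathrm{Rk}(A)$ denotes the rank of $A$. *)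

(* Defs.v *)
From HB Require Import structures.
From mathcomp Require Import all_boot all_order all_algebra.
From mathcomp Require Import classical_sets fsbigop.
Set Implicit Arguments. Unset Strict Implicit. Unset Printing Implicit Defensive.
Import GRing.Theory.
Local Open Scope ring_scope.

Definition Cspace (F : fieldType) (r s : nat) (A : 'M[F]_r) (B : 'M[F]_s)
  : {vspace 'M[F]_(r, s)} :=
  lker (linfun (fun X : 'M[F]_(r, s) => A *m X - X *m B)).

Definition keig (L : fieldType) (n : nat) (A : 'M[L]_n) (a : L) : nat :=
  \rank (eigenspace A a).

Definition meig (L : fieldType) (n : nat) (A : 'M[L]_n) (a : L) : nat :=
  \rank (kermx ((A - a%:M) ^+ n)).

(* finitely supported sum over all of L *)
Definition fsumL (L : choiceType) (g : L -> nat) : nat :=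
  (\big[addn/0%N]_(a \in [set: L]) g a)%N.

(* Main.v *)
Require Import Defs.
From HB Require Import structures.
From mathcomp Require Import all_boot all_order all_algebra.
From mathcomp Require Import ring.
Set Implicit Arguments. Unset Strict Implicit. Unset Printing Implicit Defensive.
Import GRing.Theory.
Local Open Scope ring_scope.

Lemma mul_rV_linP (R : comNzRingType) m1 n1 m2 n2 (f : 'M[R]_(m1,n1) -> 'M[R]_(m2,n2)) :
  linear f -> forall u, u *m lin_mx f = mxvec (f (vec_mx u)).
Proof.
move=> lf u.
pose F : {linear 'M[R]_(m1,n1) -> 'M[R]_(m2,n2)} := HB.pack f (GRing.isLinear.Build _ _ _ _ f lf).
exact: (mul_rV_lin F u).
Qed.

Section Tsp.
Variable K : fieldType.

Definition Tsp p q r s (U : 'M[K]_(p,r)) (V : 'M[K]_(q,s)) : 'M_(p*q, r*s) :=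
  lin_mx (fun Y : 'M_(p,q) => U^T *m Y *m V).

Lemma Tsp_lin p q r s (U : 'M[K]_(p,r)) (V : 'M[K]_(q,s)) :
  linear (fun Y : 'M_(p,q) => U^T *m Y *m V).
Proof. by move=> a X Y; rewrite mulmxDr mulmxDl -scalemxAr -scalemxAl. Qed.

Lemma mul_Tsp p q r s (U : 'M[K]_(p,r)) (V : 'M[K]_(q,s)) u :
  u *m Tsp U V = mxvec (U^T *m vec_mx u *m V).
Proof. by rewrite /Tsp (mul_rV_linP (Tsp_lin U V)). Qed.

Lemma Tsp_rank p q r s (U : 'M[K]_(p,r)) (V : 'M[K]_(q,s)) :
  row_free U -> row_free V -> \rank (Tsp U V) = (p * q)%N.
Proof.
move=> fU fV; apply/eqP; change (row_free (Tsp U V)); rewrite -kermx_eq0; apply/rowV0P => v /sub_kermxP.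
rewrite mul_Tsp => /eqP; rewrite mxvec_eq0 mulmx_free_eq0 // => /eqP/(congr1 trmx).
rewrite trmx_mul trmxK trmx0 => /eqP; rewrite mulmx_free_eq0 // => /eqP/(congr1 trmx).
by rewrite trmxK trmx0 => /(congr1 mxvec); rewrite vec_mxK linear0.
Qed.

Lemma Tsp_sub p q r s (U : 'M[K]_(p,r)) (V : 'M[K]_(q,s)) v :
  row_free U -> (v <= Tsp U V)%MS = ((vec_mx v)^T <= U)%MS && (vec_mx v <= V)%MS.
Proof.
move=> fU; apply/idP/andP.
  case/submxP => w ->; rewrite mul_Tsp mxvecK; split; last exact: submxMl.
  by rewrite !trmx_mul trmxK mulmxA submxMl.
case; case/submxP => E dE; case/submxP => D dD.
case/row_freeP: fU => U' UU'.
have -> : v = mxvec (vec_mx v) by rewrite vec_mxK.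
have eX : vec_mx v = U^T *m (U'^T *m D) *m V.
  have eX1 : vec_mx v = U^T *m E^T by rewrite -[vec_mx v]trmxK dE trmx_mul.
  rewrite -!mulmxA -dD [in RHS]eX1 !mulmxA -[U^T *m U'^T *m U^T]mulmxA.
  by rewrite -trmx_mul UU' trmx1 mulmx1 -eX1.
by rewrite eX -[U'^T *m D]mxvecK -mul_Tsp submxMl.
Qed.

Definition Zsp r s (M : 'M[K]_r) (N : 'M[K]_s) :=
  Tsp (row_base (kermx M^T)) (row_base (kermx N)).

Lemma Zsp_sub r s (M : 'M[K]_r) (N : 'M[K]_s) v :
  (v <= Zsp M N)%MS = (M *m vec_mx v == 0) && (vec_mx v *m N == 0).
Proof.
rewrite /Zsp Tsp_sub ?row_base_free // !eq_row_base.
congr andb; rewrite (sameP sub_kermxP eqP) //.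
by rewrite -trmx_mul -trmx0 (inj_eq trmx_inj).
Qed.

Lemma Zsp_rank r s (M : 'M[K]_r) (N : 'M[K]_s) :
  \rank (Zsp M N) = ((r - \rank M) * (s - \rank N))%N.
Proof.
by rewrite /Zsp Tsp_rank ?row_base_free // !mxrank_ker mxrank_tr.
Qed.

End Tsp.


Section Csp.
Variable K : fieldType.

Lemma rows_sub m1 m2 n (W : 'M[K]_(m1, n)) (Z : 'M[K]_(m2, n)) :
  (forall v : 'rV_n, (v <= W)%MS -> (v <= Z)%MS) -> (W <= Z)%MS.
Proof. by move=> h; apply/row_subP => i; apply: h; apply: row_sub. Qed.

Variables (r s : nat) (A : 'M[K]_r) (B : 'M[K]_s).

Definition Csp := kermx (lin_mx (fun X : 'M[K]_(r,s) => A *m X - X *m B)).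

Lemma Csp_lin : linear (fun X : 'M[K]_(r,s) => A *m X - X *m B).
Proof.
move=> a X Y; rewrite mulmxDr mulmxDl -scalemxAr -scalemxAl scalerBr.
by rewrite opprD addrACA.
Qed.

Lemma Csp_sub v : (v <= Csp)%MS = (A *m vec_mx v == vec_mx v *m B).
Proof.
rewrite /Csp (sameP sub_kermxP eqP) (mul_rV_linP Csp_lin) mxvec_eq0.
by rewrite subr_eq0.
Qed.

Lemma mulA_lin : linear (fun X : 'M[K]_(r,s) => A *m X).
Proof. by move=> a X Y; rewrite mulmxDr -scalemxAr. Qed.

Lemma Zsp_Csp : (Zsp A B <= Csp)%MS.
Proof.
apply: rows_sub => v; rewrite Zsp_sub Csp_sub => /andP[/eqP -> /eqP ->].
by [].
Qed.

Lemma Csp_lower : ((r - \rank A) * (s - \rank B) <= \rank Csp)%N.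
Proof. by rewrite -Zsp_rank mxrankS // Zsp_Csp. Qed.

Lemma Csp_upper :
  (\rank Csp <= (r - \rank A) * (s - \rank B) + \rank A * \rank B)%N.
Proof.
pose LA := lin_mx (fun X : 'M[K]_(r,s) => A *m X).
rewrite -(mxrank_mul_ker Csp LA) addnC leq_add //.
  rewrite -Zsp_rank mxrankS //; apply: rows_sub => v.
  rewrite sub_capmx Csp_sub Zsp_sub => /andP[/eqP eC /sub_kermxP].
  rewrite (mul_rV_linP mulA_lin) => /eqP; rewrite mxvec_eq0 => /eqP eA.
  by rewrite eA -eC eA !eqxx.
apply: (@leq_trans (\rank (Tsp (row_base A^T) (row_base B)))).
  apply: mxrankS; apply/row_subP => i.
2: by rewrite Tsp_rank ?row_base_free // mxrank_tr.

rewrite row_mul Tsp_sub ?row_base_free // !eq_row_base.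
have : (row i Csp <= Csp)%MS by apply: row_sub.
rewrite Csp_sub (mul_rV_linP mulA_lin) mxvecK => /eqP eC.
by rewrite trmx_mul submxMl /= [X in (X <= _)%MS]eC submxMl.
Qed.

End Csp.

Import VectorInternalTheory.

Lemma mul_rV_lin1P (R : comNzRingType) m n (f : 'rV[R]_m -> 'rV[R]_n) :
  linear f -> forall u, u *m lin1_mx f = f u.
Proof.
move=> lf u.
pose F : {linear 'rV[R]_m -> 'rV[R]_n} := HB.pack f (GRing.isLinear.Build _ _ _ _ f lf).
exact: (mul_rV_lin1 F u).
Qed.

Lemma dim_Cspace (K : fieldType) r s (A : 'M[K]_r) (B : 'M[K]_s) :
  \dim (Cspace A B) = \rank (Csp A B).
Proof.
rewrite /Cspace /lker /dimv (mx2vsK _).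
set h := (fun X : 'M[K]_(r,s) => A *m X - X *m B).
have -> : linfun h = Hom (lin1_mx ((@v2r _ 'M[K]_(r,s)) \o h \o (@r2v _ 'M[K]_(r,s)))).
  by rewrite unlock.
rewrite /= /Csp !mxrank_ker; congr (_ - _)%N.
have lh : linear h by apply: Csp_lin.
pose P : 'M[K]_(r*s) := lin1_mx (mxvec \o (@r2v _ 'M[K]_(r,s))).
pose Q : 'M[K]_(r*s) := lin1_mx ((@v2r _ 'M[K]_(r,s)) \o vec_mx).
have lP : linear (mxvec \o (@r2v _ 'M[K]_(r,s))).
  by move=> a x y /=; rewrite !linearP.
have lQ : linear ((@v2r _ 'M[K]_(r,s)) \o vec_mx).
  by move=> a x y /=; rewrite !linearP.
have lM : linear ((@v2r _ 'M[K]_(r,s)) \o h \o (@r2v _ 'M[K]_(r,s))).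
  by move=> a x y /=; rewrite linearP lh linearP.
have eM : lin1_mx ((@v2r _ 'M[K]_(r,s)) \o h \o (@r2v _ 'M[K]_(r,s)))
          = P *m lin_mx h *m Q.
  apply/row_matrixP => i; rewrite !rowE !mulmxA.
  rewrite (mul_rV_lin1P lM) (mul_rV_lin1P lP) (mul_rV_linP lh) (mul_rV_lin1P lQ) /=.
  by rewrite !mxvecK.
have PQ : P *m Q = 1%:M.
  apply/row_matrixP => i; rewrite !rowE mulmxA mulmx1.
  by rewrite (mul_rV_lin1P lP) (mul_rV_lin1P lQ) /= mxvecK r2vK.
have [uP uQ] := mulmx1_unit PQ.
rewrite eM mxrankMfree ?row_free_unit //.
by rewrite (eqmxMfull _ _) // row_full_unit.
Qed.


Lemma Csp_map (F L : fieldType) (f : {rmorphism F -> L}) r s (A : 'M[F]_r) (B : 'M[F]_s) :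
  \rank (Csp (map_mx f A) (map_mx f B)) = \rank (Csp A B).
Proof.
rewrite /Csp.
have e : map_mx f (lin_mx (fun X : 'M[F]_(r,s) => A *m X - X *m B)) =
   lin_mx (fun X : 'M[L]_(r,s) => map_mx f A *m X - X *m map_mx f B).
  by apply: map_lin_mx => X; rewrite map_mxB !map_mxM.
by rewrite -e -map_kermx mxrank_map.
Qed.

Section Stab.
Variables (K : fieldType) (n : nat) (M : 'M[K]_n).

Lemma pow_subS j : (M ^+ j.+1 <= M ^+ j)%MS.
Proof. by rewrite exprS -mulmxE submxMl. Qed.

Lemma pow_stab j : \rank (M ^+ j.+1) = \rank (M ^+ j) ->
  forall i, (M ^+ (j + i) :=: M ^+ j)%MS.
Proof.
move=> eqr.
have /eqmxP E1 : (M ^+ j.+1 == M ^+ j)%MS.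
  by rewrite -(mxrank_leqif_eq (pow_subS j)).2 eqr.
elim=> [|i IH]; first by rewrite addn0.
rewrite addnS exprSr -mulmxE.
apply: eqmx_trans (eqmxMr M IH) _.
by rewrite mulmxE -exprSr.
Qed.

Lemma pow_stab_exists : exists2 i, (i <= n)%N & \rank (M ^+ i.+1) = \rank (M ^+ i).
Proof.
have H : forall j, (exists2 i, (i < j)%N & \rank (M ^+ i.+1) = \rank (M ^+ i))
                   \/ (\rank (M ^+ j) + j <= n)%N.
  elim=> [|j [[i lij ei]|IH]].
  - by right; rewrite expr0 addn0 mxrank1.
  - by left; exists i => //; apply: ltnW.
  - have [e|ne] := eqVneq (\rank (M ^+ j.+1)) (\rank (M ^+ j)).
      by left; exists j.
    right; have lt : (\rank (M ^+ j.+1) < \rank (M ^+ j))%N.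
      by rewrite ltn_neqAle ne mxrankS // pow_subS.
    by rewrite addnS; apply: leq_trans IH; rewrite ltn_add2r.
case: (H n.+1) => [[i li ei]|]; first by exists i.
by rewrite addnS ltnNge leq_addl.
Qed.

Lemma pow_rank_stab k : (n <= k)%N -> \rank (M ^+ k) = \rank (M ^+ n).
Proof.
move=> lnk; have [i lin ei] := pow_stab_exists.
have := pow_stab ei (k - i); rewrite subnKC ?(leq_trans lin) // => ->.
by have := pow_stab ei (n - i); rewrite subnKC // => ->.
Qed.

Lemma ker_pow_le k l : (k <= l)%N -> (kermx (M ^+ k) <= kermx (M ^+ l))%MS.
Proof.
move=> lkl; apply/sub_kermxP.
by rewrite -(subnKC lkl) exprD -mulmxE mulmxA mulmx_ker mul0mx.
Qed.

Lemma ker_pow_stab k : (kermx (M ^+ k) <= kermx (M ^+ n))%MS.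
Proof.
case: (leqP k n) => [lkn|lnk]; first exact: ker_pow_le.
have s1 := ker_pow_le (ltnW lnk).
rewrite -(mxrank_leqif_sup s1).2 !mxrank_ker pow_rank_stab //.
exact: ltnW.
Qed.

End Stab.


Section PF.
Variable K : fieldType.

Definition Qp (rs : seq K) (c : K -> nat) (a : K) : {poly K} :=
  \prod_(b <- rs | b != a) ('X - b%:P) ^+ (c b).

Lemma pf rs c : uniq rs -> rs != [::] ->
  exists u : K -> {poly K}, \sum_(a <- rs) u a * Qp rs c a = 1.
Proof.
elim: rs => [//|a t IH] /= /andP[nat ut] _.
have cop : coprimep (('X - a%:P) ^+ (c a)) (\prod_(d <- t) ('X - d%:P) ^+ (c d)).
  apply: coprimep_expl; rewrite coprimep_sym coprimep_XsubC.
  have -> : \prod_(d <- t) ('X - d%:P) ^+ (c d) =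
            \prod_(p <- map (fun d => ('X - d%:P) ^+ (c d)) t) p by rewrite big_map.
  rewrite root_bigmul.
  rewrite all_map; apply/allP => d dt /=.
  case: (c d) => [|k]; first by rewrite expr0 root1.
  rewrite root_exp_XsubC; apply: contraNN nat => /eqP ->; exact: dt.
case/Bezout_eq1_coprimepP: cop => [[x y]] /= exy.
have QaE : Qp (a :: t) c a = \prod_(d <- t) ('X - d%:P) ^+ (c d).
  rewrite /Qp big_cons eqxx /= big_seq_cond [RHS]big_seq_cond; apply: eq_bigl => d.
  case dt: (d \in t) => //=.
  by apply: contraNneq nat => <-.
case: (eqVneq t [::]) => [tE|tn0].
  exists (fun _ => 1); rewrite big_cons QaE tE !big_nil addr0 mul1r.
  by [].
have [u hu] := IH ut tn0.
exists (fun b => if b == a then y else x * u b).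
rewrite big_cons eqxx.
rewrite (eq_big_seq (fun b => x * ('X - a%:P) ^+ (c a) * (u b * Qp t c b))).
  by rewrite -big_distrr /= hu mulr1 QaE addrC.
move=> b bt; have ba : (b == a) = false.
  by apply/negbTE; apply: contraNneq nat => <-.
rewrite ba /Qp big_cons.
have -> : (a != b) by rewrite eq_sym ba.
ring.
Qed.

End PF.


Section Basic.
Variable K : fieldType.

Lemma trmxX n (M : 'M[K]_n) k : (M ^+ k)^T = (M^T) ^+ k.
Proof.
elim: k => [|k IH]; first by rewrite !expr0 trmx1.
by rewrite exprS exprSr -!mulmxE trmx_mul IH.
Qed.

Lemma intertwine r s (A : 'M[K]_r) (B : 'M[K]_s) (X : 'M[K]_(r,s)) a k :
  A *m X = X *m B -> (A - a%:M) ^+ k *m X = X *m (B - a%:M) ^+ k.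
Proof.
move=> hX.
have hX' : (A - a%:M) *m X = X *m (B - a%:M).
  by rewrite mulmxBl mulmxBr hX mul_scalar_mx mul_mx_scalar.
elim: k => [|k IH]; first by rewrite !expr0 mul1mx mulmx1.
by rewrite !exprS -!mulmxE -mulmxA IH mulmxA hX' -mulmxA.
Qed.

Lemma rank_pow_free n (M : 'M[K]_n) k : row_free M -> row_free (M ^+ k).
Proof.
move=> fM; elim: k => [|k IH]; first by rewrite expr0 /row_free mxrank1.
by rewrite /row_free exprSr -mulmxE mxrankMfree.
Qed.

Lemma eig_rank_tr n (M : 'M[K]_n) a :
  \rank (eigenspace M^T a) = \rank (eigenspace M a).
Proof.
rewrite /eigenspace !mxrank_ker.
by rewrite -(mxrank_tr (M - a%:M)) linearB /= tr_scalar_mx.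
Qed.

End Basic.


Section Closed.
Variables (L : closedFieldType) (r s' : nat) (A : 'M[L]_r) (B : 'M[L]_s'.+1).

Definition zsB := sval (closed_field_poly_normal (char_poly B)).
Definition rsB := undup zsB.
Definition cB (a : L) := count_mem a zsB.

Lemma charB_E : char_poly B = \prod_(z <- zsB) ('X - z%:P).
Proof.
rewrite /zsB; case: closed_field_poly_normal => zs /= ->.
by rewrite (monicP (char_poly_monic B)) scale1r.
Qed.

Lemma charB_E2 : char_poly B = \prod_(a <- rsB) ('X - a%:P) ^+ cB a.
Proof. by rewrite charB_E /rsB /cB -(prodr_undup_exp_count zsB xpredT). Qed.

Lemma eig_rsB a : eigenvalue B a = (a \in rsB).
Proof. by rewrite eigenvalue_root_char charB_E root_prod_XsubC /rsB mem_undup. Qed.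

Lemma keig0 a : a \notin rsB -> keig B a = 0%N.
Proof.
by rewrite -eig_rsB /eigenvalue negbK => /eqP e; rewrite /keig e mxrank0.
Qed.

Lemma meig0 a : a \notin rsB -> meig B a = 0%N.
Proof.
rewrite -eig_rsB /eigenvalue negbK /eigenspace kermx_eq0 => fr.
rewrite /meig mxrank_ker.
by have /eqP -> := rank_pow_free s'.+1 fr; rewrite subnn.
Qed.

Lemma rsB_uniq : uniq rsB. Proof. exact: undup_uniq. Qed.

Lemma rsB_n0 : rsB != [::].
Proof.
apply/negP => /eqP e.
have := Cayley_Hamilton B; rewrite charB_E2 e big_nil rmorph1 => /eqP.
by rewrite oner_eq0.
Qed.


Lemma lowerA : (\sum_(a <- rsB) keig A a * keig B a <= \rank (Csp A B))%N.
Proof.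
rewrite (big_nth 0) big_mkord.
set k := size rsB.
pose a_ (i : 'I_k) := nth 0 rsB i.
pose S i := Tsp (row_base (eigenspace A^T (a_ i))) (row_base (eigenspace B (a_ i))).
pose RB := lin_mx (fun X : 'M[L]_(r, s'.+1) => X *m B).
have linRB : linear (fun X : 'M[L]_(r, s'.+1) => X *m B).
  by move=> c X Y; rewrite mulmxDl scalemxAl.
have SE : forall i, (S i <= eigenspace RB (a_ i))%MS.
  move=> i; apply: rows_sub => v.
  rewrite Tsp_sub ?row_base_free // !eq_row_base => /andP[_ /eigenspaceP hB].
  by apply/eigenspaceP; rewrite (mul_rV_linP linRB) hB linearZ /= vec_mxK.
have SC : forall i, (S i <= Csp A B)%MS.
  move=> i; apply: rows_sub => v.
  rewrite Tsp_sub ?row_base_free // !eq_row_base Csp_sub.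
  case/andP => /eigenspaceP hA /eigenspaceP hB.
  rewrite hB; move/(congr1 trmx): hA; rewrite trmx_mul trmxK linearZ /= trmxK => ->.
  by [].
have inj : {in xpredT &, injective a_}.
  move=> i j _ _ /eqP; rewrite /a_ nth_uniq ?rsB_uniq // => /eqP; exact: val_inj.
have dirE := mxdirect_sum_eigenspace RB inj.
have dir : mxdirect (\sum_i <<S i>>%MS).
  apply/mxdirect_sumsP => i _; apply/eqP; rewrite -submx0.
  move/mxdirect_sumsP: dirE => /(_ i isT) E0.
  have h1 : (<<S i>> :&: \sum_(j | true && (j != i)) <<S j>> <=
     eigenspace RB (a_ i) :&: \sum_(j | true && (j != i)) eigenspace RB (a_ j))%MS.
    by apply: capmxS; [rewrite genmxE | apply: sumsmxS => j _; rewrite genmxE].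
  by apply: submx_trans h1 _; rewrite E0.
have <- : \rank (\sum_i <<S i>>%MS) = (\sum_(i < k) keig A (nth (0%R : L) rsB i) * keig B (nth (0%R : L) rsB i))%N.
  rewrite (mxdirectP dir) /=; apply: eq_bigr => i _.
  by rewrite genmxE Tsp_rank ?row_base_free // eig_rank_tr.
by apply: mxrankS; apply/sumsmx_subP => i _; rewrite genmxE.
Qed.

Lemma upperA : (\rank (Csp A B) <= \sum_(a <- rsB) meig A a * meig B a)%N.
Proof.
have [u hu] := @pf L rsB cB rsB_uniq rsB_n0.
rewrite (big_nth 0) big_mkord.
set k := size rsB.
pose a_ (i : 'I_k) := nth 0 rsB i.
pose E i := horner_mx B (u (a_ i) * Qp rsB cB (a_ i)).
have sumE : \sum_i E i = 1.
  rewrite /E -raddf_sum /=.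
  have -> : \sum_(i < k) u (a_ i) * Qp rsB cB (a_ i) = 1 by rewrite -hu (big_nth 0) big_mkord.
  exact: rmorph1.
have QE : forall a, a \in rsB -> Qp rsB cB a * ('X - a%:P) ^+ (cB a) = char_poly B.
  by move=> a ha; rewrite charB_E2 (bigD1_seq a) //= ?rsB_uniq // mulrC.
have powE : forall i, (B - (a_ i)%:M) ^+ cB (a_ i) = horner_mx B (('X - (a_ i)%:P) ^+ cB (a_ i)).
  by move=> i; rewrite rmorphXn rmorphB /= horner_mx_X horner_mx_C.
have ai_in : forall i, a_ i \in rsB by move=> i; apply: mem_nth.
have key : forall i, E i *m (B - (a_ i)%:M) ^+ cB (a_ i) = 0.
  move=> i; rewrite powE mulmxE -rmorphM -mulrA QE // rmorphM /=.
  by rewrite Cayley_Hamilton mulr0.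
have comm : forall i, (B - (a_ i)%:M) ^+ cB (a_ i) *m E i = 0.
  move=> i; rewrite powE mulmxE -rmorphM mulrC -mulrA QE // rmorphM /=.
  by rewrite Cayley_Hamilton mulr0.
pose Z i := Zsp ((A - (a_ i)%:M) ^+ r) ((B - (a_ i)%:M) ^+ s'.+1).
apply: (@leq_trans (\rank (\sum_i <<Z i>>%MS))).
  apply: mxrankS; apply: rows_sub => v hv.
  have hX : A *m vec_mx v = vec_mx v *m B by apply/eqP; rewrite -Csp_sub.
  have -> : v = \sum_i mxvec (vec_mx v *m E i).
    have e1 : (1 : 'M[L]_s'.+1) = 1%:M by [].
    rewrite -linear_sum -mulmx_sumr sumE e1 mulmx1.
    exact: (esym (vec_mxK v)).
  apply: summx_sub_sums => i _; rewrite genmxE Zsp_sub mxvecK.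
  apply/andP; split; apply/eqP.
  - have h0 : (A - (a_ i)%:M) ^+ cB (a_ i) *m (vec_mx v *m E i) = 0.
      by rewrite mulmxA (intertwine _ _ hX) -mulmxA comm mulmx0.
    have : ((vec_mx v *m E i)^T <= kermx (((A - (a_ i)%:M)^T) ^+ cB (a_ i)))%MS.
      by apply/sub_kermxP; rewrite -trmxX -trmx_mul h0 trmx0.
    move/submx_trans/(_ (ker_pow_stab _ _))/sub_kermxP.
    rewrite -trmxX -trmx_mul => /(congr1 trmx); rewrite trmxK trmx0.
    by [].
  - have : (vec_mx v *m E i <= kermx ((B - (a_ i)%:M) ^+ cB (a_ i)))%MS.
      by apply/sub_kermxP; rewrite -mulmxA key mulmx0.
    by move/submx_trans/(_ (ker_pow_stab _ _))/sub_kermxP.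
apply: leq_trans (mxrank_sum_leqif _).1 _.
rewrite leq_eqVlt; apply/orP; left; apply/eqP; apply: eq_bigr => i _.
by rewrite /= genmxE Zsp_rank /meig !mxrank_ker.
Qed.

End Closed.


From mathcomp Require Import classical_sets fsbigop.

Lemma fsumL_rs (L : choiceType) (g : L -> nat) (rs : seq L) :
  uniq rs -> (forall a, a \notin rs -> g a = 0%N) ->
  fsumL g = (\sum_(a <- rs) g a)%N.
Proof.
move=> urs g0; rewrite /fsumL (fsbigE rs) //.
- by apply: eq_bigl => i; rewrite mem_setT.
- by move=> i _; apply: g0.
Qed.

Lemma mulRN (x y : nat) : (x * y)%R = (x * y)%N. Proof. by []. Qed.

Lemma partA (L : closedFieldType) r s (A : 'M[L]_r) (B : 'M[L]_s) :
  (fsumL (fun a => keig A a * keig B a) <= \rank (Csp A B))%N /\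
  (\rank (Csp A B) <= fsumL (fun a => meig A a * meig B a))%N.
Proof.
case: s B => [|s'] B.
  have k0 : forall a, keig B a = 0%N.
    by move=> a; apply/eqP; rewrite -leqn0 /keig rank_leq_row.
  have r0 : \rank (Csp A B) = 0%N.
    by apply/eqP; rewrite -leqn0; apply: leq_trans (rank_leq_row _) _; rewrite muln0.
  rewrite r0; split => //.
  by rewrite /fsumL fsbig1 // => a _; rewrite k0 muln0.
split.
  rewrite (@fsumL_rs _ _ (rsB B)).
  - exact: lowerA.
  - exact: rsB_uniq.
  - by move=> a ha; rewrite keig0 //; exact: muln0.
rewrite (@fsumL_rs _ _ (rsB B)).
- exact: upperA.
- exact: rsB_uniq.
- by move=> a ha; rewrite meig0 //; exact: muln0.
Qed.

Theorem theorem5p1 (F : fieldType) (L : closedFieldType) (f : {rmorphism F -> L})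
  (Lalg : forall x : L, exists2 p : {poly F}, p != 0 & root (map_poly f p) x)
  (r s : nat) (A : 'M[F]_r) (B : 'M[F]_s) :
  let AL := map_mx f A in let BL := map_mx f B in
  let d := \dim (Cspace A B) in
  ((fsumL (fun a => keig AL a * keig BL a) <= d)%N /\
   (d <= fsumL (fun a => meig AL a * meig BL a))%N) /\
  ((r - \rank A) * (s - \rank B) <= d)%N /\
  (d <= (r - \rank A) * (s - \rank B) + \rank A * \rank B)%N.
Proof.
move=> AL BL d.
have dE : d = \rank (Csp A B) by rewrite /d dim_Cspace.
have dL : d = \rank (Csp AL BL) by rewrite dE /AL /BL (Csp_map f A B).
split; first by rewrite dL; apply: partA.
by rewrite dE; split; [apply: Csp_lower | apply: Csp_upper].
Qed.
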